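(* If $k\geq 2$ is an integer such that $2k+1$ is prime, then $f(k)=\frac{k(k-2)}{3}$.
   Context: A $k$-colouring of the edges of the complete graph $K_n$ (colours from $[k]=\{1,\dots,k\}$) is called connected if for each colour $i\in[k]$ the edges of colour $i$ form a connected spanning subgraph of $K_n$. A triangle is multicoloured if its three edges have three distinct colours; its colour set is the set of these three colours. $f(k)$ denotes the minimum, over all $n$ and all connected $k$-colourings of $K_n$, of the number of distinct $3$-sets of colours that occur as colour sets of multicoloured triangles. *)

(* Defs.v *)
From mathcomp Require Import all_boot.
Set Implicit Arguments. Unset Strict Implicit. Unset Printing Implicit Defensive.

(* An edge k-colouring of K_n: vertices 'I_n, colour of edge {x,y} is c x y
   (only values with x != y matter); required symmetric. *)
Definition edge_colouring (n k : nat) (c : 'I_n -> 'I_n -> 'I_k) : Prop :=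
  forall x y : 'I_n, c x y = c y x.

Definition colour_rel (n k : nat) (c : 'I_n -> 'I_n -> 'I_k) (i : 'I_k) : rel 'I_n :=
  fun u v => (u != v) && (c u v == i).

Definition connected_colouring (n k : nat) (c : 'I_n -> 'I_n -> 'I_k) : Prop :=
  edge_colouring c /\
  forall (i : 'I_k) (x y : 'I_n), connect (colour_rel c i) x y.

Definition multicoloured (n k : nat) (c : 'I_n -> 'I_n -> 'I_k) (x y z : 'I_n) : bool :=
  [&& x != y, y != z, x != z,
      c x y != c y z, c y z != c x z & c x y != c x z].

Definition triangle_colour_sets (n k : nat) (c : 'I_n -> 'I_n -> 'I_k) : {set {set 'I_k}} :=
  [set [set c t.1.1 t.1.2; c t.1.2 t.2; c t.1.1 t.2]
   | t : 'I_n * 'I_n * 'I_n & multicoloured c t.1.1 t.1.2 t.2].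

Definition num_triangle_colour_sets (n k : nat) (c : 'I_n -> 'I_n -> 'I_k) : nat :=
  #|triangle_colour_sets c|.

Definition f_equals (k m : nat) : Prop :=
  (exists (n : nat) (c : 'I_n -> 'I_n -> 'I_k),
      2 <= n /\ connected_colouring c /\ num_triangle_colour_sets c = m) /\
  (forall (n : nat) (c : 'I_n -> 'I_n -> 'I_k),
      2 <= n -> connected_colouring c -> m <= num_triangle_colour_sets c).

(* Main.v *)
Require Import Defs.
From mathcomp Require Import all_boot all_algebra zify.
Set Implicit Arguments. Unset Strict Implicit. Unset Printing Implicit Defensive.
Import GRing.Theory.

Lemma three_avoid (X : 'I_3) : exists Y Z : 'I_3, [/\ Y != X, Z != X & Y != Z].
Proof.
case: X => [[|[|[|m]]] H] //.
- by exists (Ordinal (isT : 1 < 3)), (Ordinal (isT : 2 < 3)).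
- by exists (Ordinal (isT : 0 < 3)), (Ordinal (isT : 2 < 3)).
- by exists (Ordinal (isT : 0 < 3)), (Ordinal (isT : 1 < 3)).
Qed.

Lemma three_cover (a b c j : 'I_3) : a != b -> b != c -> a != c ->
  [|| a == j, b == j | c == j].
Proof.
case: a => [[|[|[|?]]] ?] //; case: b => [[|[|[|?]]] ?] //;
case: c => [[|[|[|?]]] ?] //; case: j => [[|[|[|?]]] ?] //.
Qed.

Lemma tree_count (U V : finType) (W : {set U}) (N : {set V}) (e : V -> {set U}) :
  W != set0 ->
  (forall A : {set U}, A \subset W -> A != set0 -> A != W ->
     exists T, [/\ T \in N, ~~ (e T \subset A) & exists2 b, b \in W & e T \subset b |: A]) ->
  #|W| <= #|N|.+1.
Proof.
move=> W0 Hcross.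
have key : forall m, 0 < m <= #|W| -> exists A : {set U}, exists E : {set V},
   [/\ A \subset W, #|A| = m, E \subset N, m <= #|E|.+1 & forall T, T \in E -> e T \subset A].
  elim=> [|m IH] //; case: m IH => [|m] IH.
    move=> _; case/set0Pn: W0 => w Hw.
    exists [set w], set0; split.
    - by rewrite sub1set.
    - by rewrite cards1.
    - exact: sub0set.
    - by [].
    - by move=> T; rewrite inE.
  move=> /andP [_ Hm].
  have [A [E [AW cA EN cE EA]]] := IH (ltnW Hm).
  have A0 : A != set0 by rewrite -card_gt0 cA.
  have AnW : A != W by apply: contraTneq Hm => <-; rewrite cA ltnn.
  have [T [TN TA [b bW Tb]]] := Hcross A AW A0 AnW.
  have bA : b \notin A.
    apply: contra TA => bA; apply: (subset_trans Tb).
    by rewrite subUset sub1set bA subxx.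
  have TE : T \notin E by apply: contra TA => /EA.
  exists (b |: A), (T |: E); split.
  - by rewrite subUset sub1set bW AW.
  - by rewrite cardsU1 bA cA.
  - by rewrite subUset sub1set TN EN.
  - by rewrite cardsU1 TE /= ltnS.
  - move=> T'; rewrite in_setU1 => /orP [/eqP -> //|/EA H].
    by apply: (subset_trans H); apply: subsetUr.
have Wp : 0 < #|W| by rewrite card_gt0.
have [A [E [_ _ EN cE _]]] := key #|W| (andb_true_intro (conj Wp (leqnn _))).
by apply: (leq_trans cE); rewrite ltnS subset_leq_card.
Qed.

Lemma conn_closed (T : finType) (r : rel T) (S : T -> bool) x y :
  (forall u w, S u -> r u w -> S w) -> connect r x y -> S x -> S y.
Proof.
move=> HS /connectP [p]; elim: p x => [|z p IH] x /=; first by move=> _ ->.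
by case/andP=> rxz pz Hy xS; apply: IH pz Hy (HS _ _ xS rxz).
Qed.

Section Gallai.
Variable T : finType.
Variable t : T -> T -> 'I_3.
Hypothesis tsym : forall x y, t x y = t y x.

Definition rc (X : 'I_3) (V : {set T}) : rel T :=
  fun x y => [&& x \in V, y \in V, x != y & t x y == X].

Definition rfree (V : {set T}) : Prop :=
  forall x y z, x \in V -> y \in V -> z \in V -> x != y -> y != z -> x != z ->
    [|| t x y == t y z, t y z == t x z | t x y == t x z].

Definition allconn (V : {set T}) : bool :=
  [forall X, forall x, forall y, (x \in V) ==> (y \in V) ==> connect (rc X V) x y].

Lemma rc_sym X V : symmetric (rc X V).
Proof.
move=> x y; rewrite /rc tsym eq_sym.
by case: (x \in V); case: (y \in V).
Qed.

Lemma conn_sym X V x y : connect (rc X V) x y = connect (rc X V) y x.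
Proof. exact: (sym_connect_sym (rc_sym X V)). Qed.

Lemma conn_in X V x y : connect (rc X V) x y -> x \in V -> y \in V.
Proof. by apply: (conn_closed (S := fun u => u \in V)) => u w _ /and4P []. Qed.

Lemma rfree_sub (V V' : {set T}) : V' \subset V -> rfree V -> rfree V'.
Proof.
move=> sV HV x y z xV yV zV; apply: HV; exact: (subsetP sV).
Qed.

Lemma allconnP (V : {set T}) : allconn V -> forall X x y, x \in V -> y \in V -> connect (rc X V) x y.
Proof.
move=> Hac X x y xV yV; move: Hac => /forallP /(_ X) /forallP /(_ x) /forallP /(_ y).
by rewrite xV yV.
Qed.

Lemma isolated (V : {set T}) (v : T) Y : 2 <= #|V| -> v \in V -> (forall u, ~~ rc Y V v u) -> ~~ allconn V.
Proof.
move=> cV vV HY; apply/negP => /allconnP Hac.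
have [w wV'] : exists w, w \in V :\ v.
  apply/set0Pn; rewrite -card_gt0; rewrite (cardsD1 v V) vV in cV; by [].
move: (wV'); rewrite !inE => /andP [wv wV].
have Hcl : forall u w', u == v -> rc Y V u w' -> w' == v.
  by move=> u w' /= /eqP -> Hr; move: (HY w'); rewrite Hr.
have := conn_closed Hcl (Hac Y v w vV wV) (eqxx v).
by move=> /eqP wv'; rewrite wv' eqxx in wv.
Qed.

Lemma inD1 (V : {set T}) v x : x \in V :\ v -> (x != v) && (x \in V).
Proof. by rewrite !inE. Qed.

Lemma rc_ext (V : {set T}) v X u w : u \in V :\ v -> w != v -> rc X V u w -> rc X (V :\ v) u w.
Proof.
move=> uV' wv /and4P [uV wV uw tuw].
by rewrite /rc uV' !inE wv wV uw tuw.
Qed.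

Lemma reach (V : {set T}) v X p : v \in V -> allconn V -> p \in V :\ v ->
  exists2 x, connect (rc X (V :\ v)) p x & t v x == X.
Proof.
move=> vV /allconnP Hac pV'.
case: (boolP [exists x, connect (rc X (V :\ v)) p x && (t v x == X)]).
  by case/existsP => x /andP [H1 H2]; exists x.
move/existsPn => H.
pose S := fun u => connect (rc X (V :\ v)) p u.
have Hcl : forall u w, S u -> rc X V u w -> S w.
  move=> u w; rewrite /S => Hpu Hr.
  have uV' := conn_in Hpu pV'.
  case: (eqVneq w v) => [wv|wv].
    move: (H u); rewrite Hpu /=; move: Hr => /and4P [_ _ _].
    by rewrite wv tsym => ->.
  exact: (connect_trans Hpu (connect1 (rc_ext uV' wv Hr))).
have := conn_closed Hcl (Hac X p v (proj2 (andP (inD1 pV'))) vV) (connect0 _ p).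
by rewrite /S => /conn_in /(_ pV'); rewrite !inE eqxx.
Qed.

Lemma reach2 (V : {set T}) v X p a b : v \in V -> allconn V -> p \in V :\ v ->
  a \in V :\ v -> b \in V :\ v -> ~~ connect (rc X (V :\ v)) a b ->
  exists x, [/\ x \in V :\ v, ~~ connect (rc X (V :\ v)) p x & t v x == X].
Proof.
move=> vV /allconnP Hac pV' aV' bV' nab.
case: (boolP [exists x, [&& x \in V :\ v, ~~ connect (rc X (V :\ v)) p x & t v x == X]]).
  by case/existsP => x /and3P [H1 H2 H3]; exists x.
move/existsPn => H.
have H' : forall x, x \in V :\ v -> t v x == X -> connect (rc X (V :\ v)) p x.
  move=> x xV' tx; move: (H x); rewrite xV' tx /= andbT.
  by case: (connect _ p x).
pose S := fun u => (u == v) || connect (rc X (V :\ v)) p u.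
have Hcl : forall u w, S u -> rc X V u w -> S w.
  move=> u w; rewrite /S => /orP [/eqP ->|Hpu] Hr.
    move: Hr => /and4P [_ wV vw tvw].
    have wV' : w \in V :\ v by rewrite !inE eq_sym vw wV.
    by apply/orP; right; apply: H'.
  have uV' := conn_in Hpu pV'.
  case: (eqVneq w v) => [->|wv]; first by [].
  by rewrite (connect_trans Hpu (connect1 (rc_ext uV' wv Hr))) orbT.
have inS : forall q, q \in V :\ v -> connect (rc X (V :\ v)) p q.
  move=> q qV'; have := conn_closed Hcl (Hac X p q (proj2 (andP (inD1 pV')))
     (proj2 (andP (inD1 qV')))).
  rewrite /S (negbTE (proj1 (andP (inD1 qV')))) /= => -> //.
  by rewrite connect0 orbT.
have : connect (rc X (V :\ v)) a b.
  by apply: (connect_trans _ (inS b bV')); rewrite conn_sym inS.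
by rewrite (negbTE nab).
Qed.

Lemma block (V : {set T}) v X W y0 x0 : rfree V -> v \in V -> y0 \in V :\ v ->
  x0 \in V :\ v -> t v y0 = W -> W != X -> t v x0 = X ->
  ~~ connect (rc X (V :\ v)) y0 x0 ->
  forall p q, connect (rc X (V :\ v)) y0 p -> connect (rc X (V :\ v)) x0 q -> t p q = W.
Proof.
move=> HV vV y0V' x0V' ty0 WX tx0 nyx.
have sub : V :\ v \subset V by apply: subsetDl.
have inV : forall u, u \in V :\ v -> u \in V by move=> u /(subsetP sub).
have nv : forall u, u \in V :\ v -> v != u by move=> u /inD1 /andP []; rewrite eq_sym.
have s1 : t y0 x0 = W.
  have yx : y0 != x0 by apply: contraNneq nyx => ->; apply: connect0.
  have := HV v y0 x0 vV (inV _ y0V') (inV _ x0V') (nv _ y0V') yx (nv _ x0V').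
  rewrite ty0 tx0 (negbTE WX) orbF => /orP [/eqP <- //|/eqP tyx].
  have Hyx : rc X (V :\ v) y0 x0 by rewrite /rc y0V' x0V' yx tyx eqxx.
  by move: nyx; rewrite (connect1 Hyx).
have s2 : forall p, connect (rc X (V :\ v)) y0 p -> t p x0 = W.
  move=> p Hp.
  pose S := fun u => (t u x0 == W) && connect (rc X (V :\ v)) y0 u.
  have Hcl : forall u w, S u -> rc X (V :\ v) u w -> S w.
    move=> u w; rewrite /S => /andP [/eqP tu Hu] Hr.
    have Hw := connect_trans Hu (connect1 Hr).
    rewrite Hw andbT.
    move: (Hr) => /and4P [uV' wV' uw /eqP tuw].
    have wx : w != x0 by apply: contraNneq nyx => <-.
    have ux : u != x0 by apply: contraNneq nyx => <-.
    have := HV u w x0 (inV _ uV') (inV _ wV') (inV _ x0V') uw wx ux.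
    rewrite tuw tu (eq_sym X W) (negbTE WX) orbF => /orP [/eqP twx|/eqP <- //].
    have Hwx : rc X (V :\ v) w x0 by rewrite /rc wV' x0V' wx -twx eqxx.
    by move: nyx; rewrite (connect_trans Hw (connect1 Hwx)).
  have := conn_closed Hcl Hp; rewrite /S s1 eqxx connect0 => /(_ isT) /andP [/eqP -> _].
  by [].
move=> p q Hp Hq.
have pV' := conn_in Hp y0V'.
pose S := fun u => (t p u == W) && connect (rc X (V :\ v)) x0 u.
have Hcl : forall u w, S u -> rc X (V :\ v) u w -> S w.
  move=> u w; rewrite /S => /andP [/eqP tu Hu] Hr.
  have Hw := connect_trans Hu (connect1 Hr).
  rewrite Hw andbT.
  move: (Hr) => /and4P [uV' wV' uw /eqP tuw].
  have pw : p != w.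
    apply: contraNneq nyx => pw; apply: (connect_trans Hp); rewrite pw conn_sym //.
  have pu : p != u.
    apply: contraNneq nyx => pu; apply: (connect_trans Hp); rewrite pu conn_sym //.
  have := HV p u w (inV _ pV') (inV _ uV') (inV _ wV') pu uw pw.
  rewrite tuw tu (negbTE WX) /= => /orP [/eqP tpw|/eqP <- //].
  have Hpw : rc X (V :\ v) p w by rewrite /rc pV' wV' pw -tpw eqxx.
  have : connect (rc X (V :\ v)) y0 x0.
    by apply: (connect_trans (connect_trans Hp (connect1 Hpw))); rewrite conn_sym.
  by rewrite (negbTE nyx).
have := conn_closed Hcl Hq; rewrite /S s2 // eqxx connect0 => /(_ isT) /andP [/eqP -> _].
by [].
Qed.

Lemma gallai_step m : forall V : {set T}, #|V| = m.+2 -> rfree V -> ~~ allconn V.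
Proof.
elim: m => [|m IH] V cV HV.
  have [v vV] : exists v, v \in V by apply/set0Pn; rewrite -card_gt0 cV.
  have c1 : #|V :\ v| == 1 by move: cV; rewrite (cardsD1 v V) vV add1n => -[] ->.
  case/cards1P: c1 => w Hw.
  have [Y [Z [YX _ _]]] := three_avoid (t v w).
  apply: (@isolated V v Y); first by rewrite cV.
    by [].
  move=> u; apply/negP => /and4P [_ uV vu /eqP tvu].
  have : u \in V :\ v by rewrite !inE eq_sym vu uV.
  by rewrite Hw inE => /eqP uw; move: YX; rewrite -tvu uw eqxx.
have [v vV] : exists v, v \in V by apply/set0Pn; rewrite -card_gt0 cV.
have cV' : #|V :\ v| = m.+2 by move: cV; rewrite (cardsD1 v V) vV => -[].
have HV' : rfree (V :\ v) := rfree_sub (subsetDl V [set v]) HV.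
have := IH _ cV' HV'.
move/forallPn => [X /forallPn [a /forallPn [b]]].
rewrite !negb_imply => /andP [aV' /andP [bV' nab]].
apply/negP => Hac.
case: (boolP [exists Y, [forall u, ~~ rc Y V v u]]) => [/existsP [Y /forallP HY] | ].
  by move: Hac; apply/negP; apply: (@isolated V v Y) => //; rewrite cV.
move/existsPn => Hno.
have edge : forall Y, exists u, rc Y V v u.
  by move=> Y; move: (Hno Y) => /forallPn [u]; rewrite negbK => H; exists u.
have [Y [Z [YX ZX YZ]]] := three_avoid X.
have [y Hy] := edge Y; have [z Hz] := edge Z.
move: Hy => /and4P [_ yV vy /eqP tvy].
move: Hz => /and4P [_ zV vz /eqP tvz].
have yV' : y \in V :\ v by rewrite !inE eq_sym vy yV.
have zV' : z \in V :\ v by rewrite !inE eq_sym vz zV.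
case: (boolP (connect (rc X (V :\ v)) y z)) => Hyz.
  have [x' [x'V' nyx' tvx']] := @reach2 V v X y a b vV Hac yV' aV' bV' nab.
  have nzx' : ~~ connect (rc X (V :\ v)) z x'.
    by apply: contra nyx' => Hzx; exact: connect_trans Hyz Hzx.
  have e1 := @block V v X Y y x' HV vV yV' x'V' tvy YX (eqP tvx') nyx' z x' Hyz (connect0 _ _).
  have e2 := @block V v X Z z x' HV vV zV' x'V' tvz ZX (eqP tvx') nzx' z x' (connect0 _ _) (connect0 _ _).
  by move: YZ; rewrite -e1 e2 eqxx.
have [xz Hzxz txz] := @reach V v X z vV Hac zV'.
have [xy Hyxy txy] := @reach V v X y vV Hac yV'.
have xzV' := conn_in Hzxz zV'.
have xyV' := conn_in Hyxy yV'.
have nyxz : ~~ connect (rc X (V :\ v)) y xz.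
  by apply: contra Hyz => H; apply: (connect_trans H); rewrite conn_sym.
have nzxy : ~~ connect (rc X (V :\ v)) z xy.
  apply: contra Hyz => H; apply: (connect_trans Hyxy); rewrite conn_sym //.
have e1 := @block V v X Y y xz HV vV yV' xzV' tvy YX (eqP txz) nyxz y z (connect0 _ _).
have e2 := @block V v X Z z xy HV vV zV' xyV' tvz ZX (eqP txy) nzxy z y (connect0 _ _).
have e2' : t z y = Z by apply: e2; rewrite conn_sym.
have e1' : t y z = Y by apply: e1; rewrite conn_sym.
by move: YZ; rewrite -e1' -e2' (tsym z y) eqxx.
Qed.

Lemma gallai (V : {set T}) : 2 <= #|V| -> rfree V -> ~~ allconn V.
Proof.
move=> cV; case E : #|V| cV => [|[|m]] // _; exact: gallai_step E.
Qed.
End Gallai.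

Lemma card3 (U : finType) (a b d : U) : a != b -> b != d -> a != d -> #|[set a; b; d]| = 3.
Proof.
move=> ab bd ad.
have -> : [set a; b; d] = a |: (b |: [set d]) by apply/setP => x; rewrite !inE ?orbA.
by rewrite !cardsU1 cards1 !inE (negbTE ab) (negbTE ad) (negbTE bd).
Qed.

Lemma uniq3 (U : eqType) (f : U -> 'I_3) (c1 c2 c3 u w : U) :
  f c1 != f c2 -> f c2 != f c3 -> f c1 != f c3 ->
  u \in [:: c1; c2; c3] -> w \in [:: c1; c2; c3] -> f u = f w -> u = w.
Proof.
move=> h12 h23 h13; rewrite !inE => /or3P [] /eqP -> /or3P [] /eqP -> // E.
all: move: h12 h23 h13; rewrite E eqxx //.
all: by rewrite andbF.
Qed.

Section Lower.
Variables (n k : nat) (c : 'I_n -> 'I_n -> 'I_k).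

Lemma S_mem T : T \in triangle_colour_sets c ->
  exists x y z, multicoloured c x y z /\ T = [set c x y; c y z; c x z].
Proof. by case/imsetP => [[[x y] z]]; rewrite inE /= => Hm ->; exists x, y, z. Qed.

Lemma S_card T : T \in triangle_colour_sets c -> #|T| = 3.
Proof.
case/S_mem => x [y [z [/and5P [_ _ _ h1 /andP [h2 h3]] ->]]].
by apply: card3 => //; rewrite eq_sym.
Qed.

Lemma double_count :
  \sum_(i < k) #|[set T in triangle_colour_sets c | i \in T]| = 3 * #|triangle_colour_sets c|.
Proof.
set S := triangle_colour_sets c.
have E1 : forall i, #|[set T in S | i \in T]| = \sum_(T in S) (i \in T).
  move=> i; rewrite -sum1_card (eq_bigl (fun T => (T \in S) && (i \in T))); last first.
    by move=> T; rewrite inE.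
  rewrite big_mkcondr /=; apply: eq_bigr => T _; by case: (i \in T).
rewrite (eq_bigr _ (fun i _ => E1 i)) exchange_big /=.
rewrite (eq_bigr (fun T => 3)); first by rewrite sum_nat_const mulnC.
move=> T TS; rewrite -(S_card TS) -sum1_card.
rewrite [RHS]big_mkcond /=; by apply: eq_bigr => i _; case: (i \in T).
Qed.

Definition o0 : 'I_3 := Ordinal (isT : 0 < 3).
Definition o1 : 'I_3 := Ordinal (isT : 1 < 3).
Definition o2 : 'I_3 := Ordinal (isT : 2 < 3).

Lemma ord3_cases (X : 'I_3) : [\/ X = o0, X = o1 | X = o2].
Proof.
case: X => [[|[|[|m]]] H] //.
- by apply: Or31; apply: val_inj.
- by apply: Or32; apply: val_inj.
- by apply: Or33; apply: val_inj.
Qed.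

Lemma o_neq : [/\ o0 != o1, o1 != o2 & o0 != o2].
Proof. by []. Qed.

Lemma per_colour (i : 'I_k) : 2 <= n -> 2 <= k -> connected_colouring c ->
  k - 2 <= #|[set T in triangle_colour_sets c | i \in T]|.
Proof.
move=> hn hk [hsym hconn].
set N := [set T in triangle_colour_sets c | i \in T].
have cW : #|[set~ i]| = k.-1 by rewrite cardsC1 card_ord.
suff : #|[set~ i]| <= #|N|.+1 by rewrite cW; move: hk; clear; lia.
apply: (tree_count (e := fun T => T :\ i)).
  by rewrite -card_gt0 cW; move: hk; clear; lia.
move=> A AW A0 AnW.
case/set0Pn: A0 => a aA.
have [b bW bA] : exists2 b, b \in [set~ i] & b \notin A.
  have : ~~ ([set~ i] \subset A).
    by apply: contra AnW => H; rewrite eqEsubset AW H.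
  by case/subsetPn => b bW bA; exists b.
have ai : a != i by move: (subsetP AW a aA); rewrite !inE.
have bi : b != i by move: bW; rewrite !inE.
pose g := fun col : 'I_k => if col == i then o0 else if col \in A then o1 else o2.
pose t := fun x y => g (c x y).
have tsym : forall x y, t x y = t y x by move=> x y; rewrite /t hsym.
have gi : g i = o0 by rewrite /g eqxx.
have ga : g a = o1 by rewrite /g (negbTE ai) aA.
have gb : g b = o2 by rewrite /g (negbTE bi) (negbTE bA).
have Hac : allconn t [set: 'I_n].
  apply/forallP => X; apply/forallP => x; apply/forallP => y; rewrite !inE /=.
  have key : forall col, connect (rc t (g col) setT) x y.
    move=> col; apply: (connect_sub _ (hconn col x y)) => u w /andP [uw /eqP cuw].
    by apply: connect1; rewrite /rc !inE uw /t cuw eqxx.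
  by case: (ord3_cases X) => ->; [rewrite -gi | rewrite -ga | rewrite -gb].
case: (boolP [exists x, exists y, exists z, [&& x != y, y != z, x != z &
   ~~ [|| t x y == t y z, t y z == t x z | t x y == t x z]]]); last first.
  move=> Hn; have : rfree t [set: 'I_n].
    move=> x y z _ _ _ xy yz xz.
    move/existsPn: Hn => /(_ x) /existsPn /(_ y) /existsPn /(_ z).
    by rewrite xy yz xz /= negbK.
  by move/(gallai tsym); rewrite cardsT card_ord => /(_ hn); rewrite Hac.
case/existsP => x /existsP [y /existsP [z /and4P [xy yz xz]]].
rewrite !negb_or => /and3P [h12 h23 h13].
have m : multicoloured c x y z.
  rewrite /multicoloured xy yz xz /=.
  by apply/and3P; split;
    [apply: contraNneq h12 => E | apply: contraNneq h23 => E | apply: contraNneq h13 => E];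
    rewrite /t E.
set T := [set c x y; c y z; c x z].
have TS : T \in triangle_colour_sets c.
  by apply/imsetP; exists (x, y, z); rewrite ?inE.
have memT : forall col, (col \in T) = (col \in [:: c x y; c y z; c x z]) by move=> col; rewrite !inE ?orbA.
have g0 : forall col, (g col == o0) = (col == i).
  by move=> col; rewrite /g; case: (col == i) => //; case: (col \in A).
have [b' b'T gb'] : exists2 b', b' \in T & g b' = o2.
  have := three_cover o2 h12 h23 h13.
  by case/or3P => /eqP H; [exists (c x y) | exists (c y z) | exists (c x z)]; rewrite ?inE ?eqxx ?orbT.
have b'i : b' != i by rewrite -g0 gb'.
exists T; split.
- by rewrite inE TS /=; have := three_cover o0 h12 h23 h13;
    case/or3P; rewrite g0 => /eqP <-; rewrite !inE eqxx ?orbT.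
- apply/subsetPn; exists b'; first by rewrite in_setD1 b'i.
  by apply/negP => bA'; move: gb'; rewrite /g (negbTE b'i) bA' => /(congr1 val).
- exists b'; first by rewrite !inE.
  apply/subsetP => col; rewrite !inE => /andP [coli colT].
  case: (boolP (col \in A)) => colA; first by rewrite orbT.
  have gc : g col = g b' by rewrite gb' /g (negbTE coli) (negbTE colA).
  have colT' : col \in T by rewrite !inE.
  rewrite memT in colT'; rewrite memT in b'T.
  by rewrite (@uniq3 _ g (c x y) (c y z) (c x z) col b' h12 h23 h13 colT' b'T gc) eqxx.
Qed.
End Lower.

Lemma lower_total n k (c : 'I_n -> 'I_n -> 'I_k) : 2 <= n -> 2 <= k -> connected_colouring c ->
  k * (k - 2) <= 3 * #|triangle_colour_sets c|.
Proof.
move=> hn hk hc; rewrite -double_count.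
apply: (@leq_trans (\sum_(i < k) (k - 2))); first by rewrite sum_nat_const card_ord.
by apply: leq_sum => i _; exact: per_colour.
Qed.

Lemma card3_neq (U : finType) (a b d : U) : #|[set a; b; d]| = 3 -> [/\ a != b, b != d & a != d].
Proof.
move=> E; have le2 : forall x y : U, #|[set x; y]| != 3.
  by move=> x y; rewrite cards2; case: (x != y).
split; apply/negP => /eqP Eq; move: E.
- have -> : [set a; b; d] = [set b; d].
    by rewrite Eq; apply/setP => z; rewrite !inE; case: (z == b); case: (z == d).
  by move/eqP; rewrite (negbTE (le2 _ _)).
- have -> : [set a; b; d] = [set a; d].
    by rewrite Eq; apply/setP => z; rewrite !inE; case: (z == a); case: (z == d).
  by move/eqP; rewrite (negbTE (le2 _ _)).
- have -> : [set a; b; d] = [set b; d].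
    by rewrite Eq; apply/setP => z; rewrite !inE; case: (z == b); case: (z == d).
  by move/eqP; rewrite (negbTE (le2 _ _)).
Qed.

Lemma set3_12 (U : finType) (a b d : U) : [set a; b; d] = [set b; a; d].
Proof. by apply/setP => z; rewrite !inE; case: (z == a); case: (z == b); case: (z == d). Qed.
Lemma set3_23 (U : finType) (a b d : U) : [set a; b; d] = [set a; d; b].
Proof. by apply/setP => z; rewrite !inE; case: (z == a); case: (z == b); case: (z == d). Qed.
Lemma set3_rot (U : finType) (a b d : U) : [set a; b; d] = [set d; a; b].
Proof. by apply/setP => z; rewrite !inE; case: (z == a); case: (z == b); case: (z == d). Qed.

Section Constr.
Variable k : nat.
Hypothesis hk : (2 <= k)%N.
Local Notation m := (2 * k).-1.
Local Notation p := m.+2.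
Hypothesis pr : prime p.

Lemma pE : p = (2 * k).+1.
Proof. lia. Qed.

Local Open Scope ring_scope.

Lemma ltp (d : 'Z_p) : (nat_of_ord d < p)%N.
Proof. exact: ltn_ord. Qed.

Definition cls (d : 'Z_p) : nat := minn (nat_of_ord d) (p - nat_of_ord d).

Lemma cls_lt (d : 'Z_p) : ((cls d).-1 < k)%N.
Proof. have := ltp d; rewrite /cls; lia. Qed.

Definition col (d : 'Z_p) : 'I_k := Ordinal (cls_lt d).

Definition cc (x y : 'Z_p) : 'I_k := col (x - y).

Lemma val_opp (d : 'Z_p) : d != 0 -> nat_of_ord (- d) = (p - nat_of_ord d)%N.
Proof.
move=> d0; have dp := ltp d.
have : nat_of_ord d != 0%N by apply: contra d0 => /eqP H; apply/eqP; apply: val_inj.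
move=> H; rewrite [LHS]/= /Zp_trunc /= modn_small //; move: H dp; rewrite /Zp_trunc /=; lia.
Qed.

Lemma col_opp d : col (- d) = col d.
Proof.
case: (eqVneq d 0) => [->|d0]; first by rewrite oppr0.
apply: val_inj; rewrite /= /cls val_opp //.
have dp := ltp d; have : nat_of_ord d != 0%N.
  by apply: contra d0 => /eqP H; apply/eqP; apply: val_inj.
lia.
Qed.

Lemma col_inj d1 d2 : d1 != 0 -> d2 != 0 -> col d1 = col d2 -> d1 = d2 \/ d1 = - d2.
Proof.
move=> h1 h2 /(congr1 val) /=; rewrite /cls => E.
have p1 := ltp d1; have p2 := ltp d2.
have n1 : nat_of_ord d1 != 0%N by apply: contra h1 => /eqP H; apply/eqP; apply: val_inj.
have n2 : nat_of_ord d2 != 0%N by apply: contra h2 => /eqP H; apply/eqP; apply: val_inj.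
have : (nat_of_ord d1 = nat_of_ord d2 \/ nat_of_ord d1 = p - nat_of_ord d2)%N by lia.
case=> H; [left; exact: val_inj | right; apply: val_inj; change (nat_of_ord d1 = nat_of_ord (- d2)); rewrite val_opp //].
Qed.

Definition alpha (a : 'I_k) : 'Z_p := (a.+1)%:R.

Lemma val_alpha a : nat_of_ord (alpha a) = a.+1.
Proof. rewrite /alpha val_Zp_nat // modn_small //; have := ltn_ord a; lia. Qed.

Lemma col_alpha a : col (alpha a) = a.
Proof. apply: val_inj; change ((cls (alpha a)).-1 = nat_of_ord a); rewrite /cls val_alpha; have := ltn_ord a; lia. Qed.

Lemma alpha_neq0 a : alpha a != 0.
Proof. by apply/eqP => /(congr1 (@nat_of_ord _)); rewrite val_alpha. Qed.

Lemma alpha_unit a : alpha a \is a GRing.unit.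
Proof.
rewrite /alpha unitZpE // prime_coprime // gtnNdvd //; have := ltn_ord a; lia.
Qed.

Lemma pnat0 : (p%:R : 'Z_p) = 0.
Proof. exact: pchar_Zp. Qed.

Lemma nat_opp (i j : nat) (al : 'Z_p) : (i + j)%N = p -> i%:R * al = - (j%:R * al).
Proof. by move=> H; apply/eqP; rewrite -addr_eq0 -mulrDl -natrD H pnat0 mul0r. Qed.

Lemma cc_sym x y : cc x y = cc y x.
Proof. by rewrite /cc -opprB col_opp. Qed.

Lemma conn_cc (a : 'I_k) x y : connect (colour_rel cc a) x y.
Proof.
set al := alpha a.
have step : forall j, connect (colour_rel cc a) x (x + j%:R * al).
  elim=> [|j IH]; first by rewrite mul0r addr0 connect0.
  apply: (connect_trans IH); apply: connect1.
  have E : x + j.+1%:R * al = (x + j%:R * al) + al by rewrite mulrSr mulrDl mul1r addrA.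
  rewrite E /colour_rel /cc.
  have -> : x + j%:R * al - (x + j%:R * al + al) = - al by rewrite opprD addrA subrr add0r.
  rewrite col_opp col_alpha eqxx andbT.
  apply/eqP => /(congr1 (fun u => u - (x + j%:R * al))).
  rewrite subrr addrC addKr => /eqP; rewrite eq_sym (negbTE (alpha_neq0 a)).
  done.
have := step (val ((y - x) / al)).
by rewrite natr_Zp divrK ?alpha_unit // addrC subrK.
Qed.


Lemma stepT a e : e != 0 -> e + alpha a != 0 -> #|[set a; col e; col (e + alpha a)]| = 3 ->
  exists j : 'I_(k - 2), [set a; col e; col (e + alpha a)] =
     [set a; col ((j + 2)%N%:R * alpha a); col ((j + 3)%N%:R * alpha a)].
Proof.
move=> e0 ea0 /card3_neq [h1 h2 h3].
set al := alpha a.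
have [t [tp eE]] : exists t, (t < p)%N /\ e = t%:R * al.
  by exists (nat_of_ord (e / al)); split; [exact: ltp | rewrite natr_Zp divrK ?alpha_unit].
have eaE : e + al = (t + 1)%N%:R * al by rewrite eE natrD mulrDl mul1r.
have : t = 0%N \/ t = 1%N \/ t = k \/ t = (2 * k - 1)%N \/ (t = 2 * k)%N \/
          ((2 <= t <= k - 1)%N \/ (k + 1 <= t <= 2 * k - 2)%N) by lia.
case=> [Ht|[Ht|[Ht|[Ht|[Ht|[/andP [t1 t2]|/andP [t1 t2]]]]]]].
- by move: e0; rewrite eE Ht mul0r eqxx.
- by move: h1; rewrite eE Ht mul1r col_alpha eqxx.
- have : e + al = - e.
    by rewrite eaE eE Ht; apply: nat_opp; lia.
  by move=> E; move: h2; rewrite E col_opp eqxx.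
- have : e + al = - (1%:R * al).
    by rewrite eaE Ht; apply: nat_opp; lia.
  by move=> E; move: h3; rewrite E mul1r col_opp col_alpha eqxx.
- by move: ea0; rewrite eaE Ht addn1 -[(2 * k).+1]pE pnat0 mul0r eqxx.
- have jl : (t - 2 < k - 2)%N by lia.
  exists (Ordinal jl) => /=.
  have -> : (t - 2 + 2 = t)%N by lia.
  have -> : (t - 2 + 3 = t + 1)%N by lia.
  by rewrite eaE eE.
- have jl : (2 * k - t - 2 < k - 2)%N by lia.
  exists (Ordinal jl) => /=.
  have -> : ((2 * k - t - 2 + 2)%N%:R * al = - (e + al)).
    by rewrite eaE; apply: nat_opp; lia.
  have -> : ((2 * k - t - 2 + 3)%N%:R * al = - e).
    by rewrite eE; apply: nat_opp; lia.
  by rewrite !col_opp set3_23.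
Qed.

Lemma reduce a u w : u != 0 -> w != 0 -> u + w != 0 ->
  a \in [set col u; col w; col (u + w)] ->
  exists e, [/\ e != 0, e + alpha a != 0 &
     [set col u; col w; col (u + w)] = [set a; col e; col (e + alpha a)]].
Proof.
move=> u0 w0 uw0.
have ca := col_alpha a; have al0 := alpha_neq0 a.
move: ca al0; set al := alpha a => ca al0.
rewrite !inE -orbA => /or3P [/eqP Ha|/eqP Ha|/eqP Ha].
- have Hc : col u = col al by rewrite ca Ha.
  case: (col_inj u0 al0 Hc) => Hu.
    exists w; rewrite -Hu (addrC w u); split => //.
    by rewrite Ha.
  exists (w + u).
  have E : w + u + al = w by rewrite Hu subrK.
  rewrite E; split => //; first by rewrite addrC.
  by rewrite Ha (addrC w u) set3_23.
- have Hc : col w = col al by rewrite ca Ha.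
  case: (col_inj w0 al0 Hc) => Hw.
    exists u; rewrite -Hw; split => //.
    by rewrite Ha set3_12.
  exists (u + w).
  have E : u + w + al = u by rewrite Hw subrK.
  rewrite E; split => //.
  by rewrite Ha set3_12 set3_23.
- have Hc : col (u + w) = col al by rewrite ca Ha.
  case: (col_inj uw0 al0 Hc) => Huw.
    exists (- u); rewrite -Huw addKr col_opp oppr_eq0; split => //.
    by rewrite Ha set3_rot.
  have E : u + al = - w by rewrite -[al]opprK -Huw opprD addrA subrr add0r.
  exists u; rewrite E oppr_eq0; split => //.
  by rewrite col_opp Ha set3_rot.
Qed.

Lemma per_upper a : (#|[set T in triangle_colour_sets cc | a \in T]| <= k - 2)%N.
Proof.
pose Tj (j : 'I_(k - 2)) :=
  [set a; col ((j + 2)%N%:R * alpha a); col ((j + 3)%N%:R * alpha a)].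
apply: (@leq_trans #|[set Tj j | j : 'I_(k - 2)]|); last first.
  by apply: (leq_trans (leq_imset_card _ _)); rewrite card_ord.
apply: subset_leq_card; apply/subsetP => T; rewrite inE => /andP [TS aT].
have c3 := S_card TS.
case/S_mem: TS => x [y [z [/and5P [xy yz xz _ _] ET]]].
have u0 : x - y != 0 by rewrite subr_eq0.
have w0 : y - z != 0 by rewrite subr_eq0.
have Hxz : x - z = (x - y) + (y - z) by rewrite addrA subrK.
have uw0 : (x - y) + (y - z) != 0 by rewrite -Hxz subr_eq0.
have ET2 : T = [set col (x - y); col (y - z); col ((x - y) + (y - z))].
  by rewrite ET /cc Hxz.
rewrite ET2 in aT c3 *.
have [e [e0 ea0 ET']] := reduce u0 w0 uw0 aT.
rewrite ET' in c3 *.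
have [j Hj] := stepT e0 ea0 c3.
by apply/imsetP; exists j.
Qed.

End Constr.

Theorem corollary5 (k : nat) :
  2 <= k -> prime (2 * k + 1) -> f_equals k ((k * (k - 2)) %/ 3).
Proof.
move=> hk pr.
have pr' : prime ((2 * k).-1.+2) by have -> : (2 * k).-1.+2 = 2 * k + 1 by lia.
split.
  exists ((2 * k).-1.+2), (cc hk pr').
  have hc : connected_colouring (cc hk pr').
    by split; [move=> x y; exact: cc_sym | move=> i x y; exact: conn_cc].
  have lo := lower_total (isT : 2 <= (2 * k).-1.+2) hk hc.
  have up : 3 * #|triangle_colour_sets (cc hk pr')| <= k * (k - 2).
    rewrite -double_count.
    apply: (@leq_trans (\sum_(i < k) (k - 2))); last by rewrite sum_nat_const card_ord.
    by apply: leq_sum => a _; exact: per_upper.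
  split; first by [].
  split; first exact: hc.
  rewrite /num_triangle_colour_sets.
  have -> : k * (k - 2) = 3 * #|triangle_colour_sets (cc hk pr')|.
    by apply/eqP; rewrite eqn_leq lo up.
  by rewrite mulKn.
move=> n c hn hc.
have lo := lower_total hn hk hc.
rewrite /num_triangle_colour_sets.
by rewrite -(mulKn #|triangle_colour_sets c| (isT : 0 < 3)) leq_div2r.
Qed.
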